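(* Let $0<r<1$ and let $J$ be an invertible operator on a Hilbert space $\mathcal H$. Then $J\in\mathcal C_{1,r}$ if and only if $(1+r^2)I_{\mathcal H}-J^*J-r^2J^{-1}J^{-*}=0$. Moreover, $J\in\mathcal C_{1,r}$ if and only if $r^{-1/2}J\in\mathcal QA_{\sqrt r}$.
   Context: For $0<s<1$, $\mathcal C_{1,s}$ is the class of operators $J$ on a Hilbert space $\mathcal H$ for which there exist orthogonal projections $P_0,P_1$ on $\mathcal H$ with $P_0+P_1=I_{\mathcal H}$ and $J^*J=P_0+s^2P_1$; $\mathcal QA_s$ is the class of operators $S$ on $\mathcal H$ for which there exist orthogonal projections $P_0,P_1$ with $P_0+P_1=I_{\mathcal H}$ and $S^*S=s^2P_0+s^{-2}P_1$. $J^{-*}=(J^{-1})^*$. *)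

(* Defs.v *)
From HB Require Import structures.
From mathcomp Require Import all_boot all_order all_algebra.
From mathcomp Require Import reals.
From mathcomp Require Import complex.
Set Implicit Arguments. Unset Strict Implicit. Unset Printing Implicit Defensive.
Import Order.TTheory GRing.Theory Num.Theory.
Local Open Scope ring_scope.
Local Open Scope complex_scope.

Section Hilbert.
Variable R : realType.
Variable V : lmodType R[i].
Variable ip : V -> V -> R[i].

Definition normsq (x : V) : R[i] := ip x x.

Definition is_inner_product : Prop :=
  [/\ (forall (a : R[i]) (x y z : V), ip (a *: x + y) z = a * ip x z + ip y z),
      (forall x y : V, ip y x = Num.conj (ip x y)),
      (forall x : V, 0 <= ip x x) &
      (forall x : V, ip x x = 0 -> x = 0)].

Definition norm_cauchy (u : nat -> V) : Prop :=
  forall e : R, 0 < e -> exists N : nat, forall m n : nat,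
    (N <= m)%N -> (N <= n)%N -> normsq (u m - u n) < e%:C.

Definition norm_converges_to (u : nat -> V) (l : V) : Prop :=
  forall e : R, 0 < e -> exists N : nat, forall n : nat,
    (N <= n)%N -> normsq (u n - l) < e%:C.

Definition is_hilbert_space : Prop :=
  is_inner_product /\
  (forall u : nat -> V, norm_cauchy u -> exists l : V, norm_converges_to u l).

Definition is_operator (T : V -> V) : Prop :=
  (forall (a : R[i]) (x y : V), T (a *: x + y) = a *: T x + T y) /\
  (exists M : R, forall x : V, normsq (T x) <= M%:C * normsq x).

Definition is_adjoint (T Tstar : V -> V) : Prop :=
  forall x y : V, ip (T x) y = ip x (Tstar y).

Definition is_orth_proj (P : V -> V) : Prop :=
  [/\ is_operator P, (forall x, P (P x) = P x) & is_adjoint P P].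

Definition class_C1 (s : R) (J : V -> V) : Prop :=
  is_operator J /\
  exists Jstar : V -> V, is_adjoint J Jstar /\
  exists P0 P1 : V -> V,
    [/\ is_orth_proj P0, is_orth_proj P1,
        (forall x, P0 x + P1 x = x) &
        (forall x, Jstar (J x) = P0 x + (s ^+ 2)%:C *: P1 x)].

Definition class_QA (s : R) (S : V -> V) : Prop :=
  is_operator S /\
  exists Sstar : V -> V, is_adjoint S Sstar /\
  exists P0 P1 : V -> V,
    [/\ is_orth_proj P0, is_orth_proj P1,
        (forall x, P0 x + P1 x = x) &
        (forall x, Sstar (S x) = (s ^+ 2)%:C *: P0 x + (s ^- 2)%:C *: P1 x)].

End Hilbert.

(* Main.v *)
Require Import Defs.
From HB Require Import structures.
From mathcomp Require Import all_boot all_order all_algebra.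
From mathcomp Require Import reals.
From mathcomp Require Import complex.
From mathcomp Require Import ring lra.
Import Order.TTheory GRing.Theory Num.Theory.
Local Open Scope ring_scope.
Local Open Scope complex_scope.
Set Implicit Arguments. Unset Strict Implicit. Unset Printing Implicit Defensive.

Section Aux.
Variable R : realType.
Variable V : lmodType R[i].

Definition phi (p q : V) (a b : R[i]) := a *: p + b *: q.

Lemma phiD p q a b c d : phi p q a b + phi p q c d = phi p q (a + c) (b + d).
Proof. by rewrite /phi !scalerDl addrACA. Qed.
Lemma phiN p q a b : - phi p q a b = phi p q (- a) (- b).
Proof. by rewrite /phi opprD !scaleNr. Qed.
Lemma phiZ p q k a b : k *: phi p q a b = phi p q (k * a) (k * b).
Proof. by rewrite /phi scalerDr !scalerA. Qed.
Lemma phi_eq p q a b c d : a = c -> b = d -> phi p q a b = phi p q c d.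
Proof. by move=> -> ->. Qed.
Lemma phi_eq0 p q a b : a = 0 -> b = 0 -> phi p q a b = 0.
Proof. by move=> -> ->; rewrite /phi !scale0r addr0. Qed.
Lemma phi_p p q : p = phi p q 1 0.
Proof. by rewrite /phi scale1r scale0r addr0. Qed.
Lemma phi_q p q : q = phi p q 0 1.
Proof. by rewrite /phi scale1r scale0r add0r. Qed.
End Aux.

Ltac lin2 p q :=
  let f := fresh "f" in
  pose f := phi p q;
  let Ep := fresh "Ep" in let Eq := fresh "Eq" in
  have Ep : p = f 1 0 := phi_p p q;
  have Eq : q = f 0 1 := phi_q p q;
  let fD := fresh "fD" in let fN := fresh "fN" in let fZ := fresh "fZ" in
  have fD : forall a b c d, f a b + f c d = f (a + c) (b + d) := phiD p q;
  have fN : forall a b, - f a b = f (- a) (- b) := phiN p q;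
  have fZ : forall k a b, k *: f a b = f (k * a) (k * b) := phiZ p q;
  rewrite Ep Eq; clear Ep Eq;
  rewrite !(fD, fN, fZ);
  first [ apply: phi_eq0 | apply: phi_eq ].


Ltac fld := unshelve field; try (rewrite fmorph_eq0); try done; try assumption.

Section IP.
Variable R : realType.
Variable V : lmodType R[i].
Variable ip : V -> V -> R[i].
Hypothesis hip : is_inner_product ip.

Lemma ip0l z : ip 0 z = 0.
Proof.
case: hip => H1 _ _ _.
have := H1 1 0 0 z; rewrite scaler0 addr0 mul1r => h.
by apply: (addrI (ip 0 z)); rewrite addr0 -h.
Qed.

Lemma ipZl a x z : ip (a *: x) z = a * ip x z.
Proof. case: hip => H1 _ _ _. by have := H1 a x 0 z; rewrite addr0 ip0l addr0. Qed.

Lemma ipDl x y z : ip (x + y) z = ip x z + ip y z.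
Proof. case: hip => H1 _ _ _. by have := H1 1 x y z; rewrite scale1r mul1r. Qed.

Lemma ip0r x : ip x 0 = 0.
Proof. case: hip => _ H2 _ _. by rewrite [LHS]H2 ip0l rmorph0. Qed.

Lemma ipDr x y z : ip x (y + z) = ip x y + ip x z.
Proof. case: hip => _ H2 _ _. by rewrite [LHS]H2 [ip x y]H2 [ip x z]H2 ipDl rmorphD. Qed.

Lemma ipZr a x y : ip x (a *: y) = Num.conj a * ip x y.
Proof. case: hip => _ H2 _ _. by rewrite [LHS]H2 [ip x y]H2 ipZl rmorphM. Qed.

Lemma ipBr x y z : ip x (y - z) = ip x y - ip x z.
Proof. by rewrite ipDr -scaleN1r ipZr rmorphN1 mulN1r. Qed.

Lemma ip_ext u v : (forall x, ip x u = ip x v) -> u = v.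
Proof.
case: hip => _ _ _ H4 H.
apply/eqP; rewrite -subr_eq0; apply/eqP; apply: H4.
by rewrite ipBr H subrr.
Qed.

Definition linop (T : V -> V) := forall a x y, T (a *: x + y) = a *: T x + T y.

Lemma lin0 T : linop T -> T 0 = 0.
Proof.
move=> hT; have := hT 1 0 0; rewrite scaler0 addr0 scale1r => h.
by apply: (addrI (T 0)); rewrite addr0 -h.
Qed.
Lemma linD T : linop T -> forall x y, T (x + y) = T x + T y.
Proof. by move=> hT x y; have := hT 1 x y; rewrite !scale1r. Qed.
Lemma linZ T : linop T -> forall a x, T (a *: x) = a *: T x.
Proof. by move=> hT a x; have := hT a x 0; rewrite !addr0 lin0 // addr0. Qed.
Lemma linN T : linop T -> forall x, T (- x) = - T x.
Proof. by move=> hT x; rewrite -scaleN1r linZ // scaleN1r. Qed.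
Lemma linB T : linop T -> forall x y, T (x - y) = T x - T y.
Proof. by move=> hT x y; rewrite linD // linN. Qed.

Lemma adj_lin T Ts : is_adjoint ip T Ts -> linop Ts.
Proof.
move=> hT a x y; apply: ip_ext => z.
by rewrite -hT !ipDr !ipZr !hT.
Qed.

Lemma adj_uniq T S1 S2 : is_adjoint ip T S1 -> is_adjoint ip T S2 ->
  forall y, S1 y = S2 y.
Proof. by move=> h1 h2 y; apply: ip_ext => x; rewrite -h1 -h2. Qed.

Lemma conj_real (k : R) : Num.conj (k%:C) = k%:C.
Proof. by apply: conj_Creal; apply/complex_realP; exists k. Qed.

Lemma proj_orth P Q : linop P -> (forall x, P (P x) = P x) ->
  (forall x, P x + Q x = x) -> forall x, P (Q x) = 0.
Proof.
move=> hP hPP hs x; have := congr1 P (hs x).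
rewrite linD // hPP => h.
by apply: (addrI (P x)); rewrite addr0.
Qed.

Lemma proj_bound P Q : linop P -> (forall x, P (P x) = P x) -> is_adjoint ip P P ->
  linop Q -> (forall x, Q (Q x) = Q x) -> is_adjoint ip Q Q ->
  (forall x, P x + Q x = x) -> forall x, normsq ip (P x) <= 1%:C * normsq ip x.
Proof.
move=> hP hPP aP hQ hQQ aQ hs x.
have hs' : forall x, Q x + P x = x by move=> y; rewrite addrC.
rewrite mul1r /normsq -{3 4}(hs x) ipDl !ipDr.
rewrite [ip (P x) (Q x)]aP [ip (Q x) (P x)]aQ (proj_orth hP hPP hs) (proj_orth hQ hQQ hs').
rewrite !ip0r addr0 add0r lerDl; by case: hip.
Qed.

Lemma comb_lin T1 T2 a b : linop T1 -> linop T2 -> linop (fun x => a *: T1 x + b *: T2 x).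
Proof.
move=> h1 h2 c x y /=; rewrite h1 h2 !scalerDr !scalerA [a * c]mulrC [b * c]mulrC.
by rewrite addrACA.
Qed.

Lemma comb_adj T (a b : R) : is_adjoint ip T T ->
  is_adjoint ip (fun x => a%:C *: T x + b%:C *: x) (fun x => a%:C *: T x + b%:C *: x).
Proof. by move=> hT x y /=; rewrite ipDl !ipZl ipDr !ipZr !conj_real hT. Qed.

Lemma scale_adj T Ts (c : R) : is_adjoint ip T Ts ->
  is_adjoint ip (fun x => c%:C *: T x) (fun y => c%:C *: Ts y).
Proof. by move=> hT x y /=; rewrite ipZl ipZr conj_real hT. Qed.

Lemma C1_iff s J Jstar : is_operator ip J -> is_adjoint ip J Jstar ->
  (class_C1 ip s J <-> exists P0 P1, [/\ is_orth_proj ip P0, is_orth_proj ip P1,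
     (forall x, P0 x + P1 x = x) & forall x, Jstar (J x) = P0 x + (s ^+ 2)%:C *: P1 x]).
Proof.
move=> hJ hJs; split.
  case=> _ [Js' [hJs' [P0 [P1 [h0 h1 hs hA]]]]].
  by exists P0, P1; split=> // x; rewrite -hA (adj_uniq hJs hJs').
case=> P0 [P1 [h0 h1 hs hA]]; split=> //; exists Jstar; split=> //.
by exists P0, P1; split.
Qed.
End IP.

Theorem proposition2p3 (R : realType) (V : lmodType R[i]) (ip : V -> V -> R[i])
  (hH : is_hilbert_space ip) (r : R) (hr0 : 0 < r) (hr1 : r < 1)
  (J Jstar Jinv Jinvstar : V -> V)
  (hJ : is_operator ip J) (hJstar : is_adjoint ip J Jstar)
  (hJinv : is_operator ip Jinv)
  (hJJinv : forall x, J (Jinv x) = x) (hJinvJ : forall x, Jinv (J x) = x)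
  (hJinvstar : is_adjoint ip Jinv Jinvstar) :
  (class_C1 ip r J <->
     (forall x : V, (1 + r ^+ 2)%:C *: x - Jstar (J x)
                     - (r ^+ 2)%:C *: Jinv (Jinvstar x) = 0)) /\
  (class_C1 ip r J <->
     class_QA ip (Num.sqrt r) (fun x => (Num.sqrt r)^-1%:C *: J x)).
Proof.
have hip := hH.1.
have H2 : forall x y, ip y x = Num.conj (ip x y) by case: hip.
have linJ : linop J := hJ.1.
have linJs := adj_lin hip hJstar.
have JisJs : forall z, Jinvstar (Jstar z) = z.
  by move=> z; apply: (ip_ext hip) => x; rewrite -hJinvstar -hJstar hJJinv.
have AinvA : forall x, Jinv (Jinvstar (Jstar (J x))) = x.
  by move=> x; rewrite JisJs hJinvJ.
have linA : linop (fun x => Jstar (J x)) by move=> a x y; rewrite linJ linJs.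
have adjA : is_adjoint ip (fun x => Jstar (J x)) (fun x => Jstar (J x)).
  by move=> x y /=; rewrite -hJstar [LHS]H2 -hJstar [RHS]H2.
have rn0 : r != 0 by rewrite gt_eqF.
have C1E := C1_iff hip r hJ hJstar.
split.
  rewrite C1E; split.
    case=> P0 [P1 [[o0 i0 a0] [o1 i1 a1] hs hA]] x.
    have l0 : linop P0 := o0.1.
    have l1 : linop P1 := o1.1.
    have hs' : forall x, P1 x + P0 x = x by move=> z; rewrite addrC.
    have P01 := proj_orth l0 i0 hs.
    have P10 := proj_orth l1 i1 hs'.
    have Ay : Jstar (J (P0 x + (r ^- 2)%:C *: P1 x)) = x.
      rewrite hA (linD l0) (linZ l0) (linD l1) (linZ l1) i0 i1 P01 P10 scaler0 addr0 add0r.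
      rewrite -[RHS]hs scalerA.
      have -> : (r ^+ 2)%:C * (r ^- 2)%:C = 1 :> R[i].
        fld.
      by rewrite scale1r.
    have Ax : Jinv (Jinvstar x) = P0 x + (r ^- 2)%:C *: P1 x.
      by rewrite -{1}Ay AinvA.
    rewrite Ax hA -{1}(hs x).
    move: (P0 x) (P1 x) => p q.
    by lin2 p q; fld.
  move=> E.
  have AA : forall x, Jstar (J (Jstar (J x))) = (1 + r^+2)%:C *: Jstar (J x) - (r^+2)%:C *: x.
    move=> x; have := E (Jstar (J x)); rewrite AinvA => /eqP; rewrite subr_eq0 => /eqP h.
    by rewrite -h opprB addrC subrK.
  have r2lt : r^+2 < 1 by rewrite expr2; nra.
  have hr2 : 1 - r^+2 != 0 by rewrite subr_eq0 eq_sym lt_eqF.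
  have hr2C : (1 - r%:C ^+ 2 : R[i]) != 0.
    have -> : (1 - r%:C ^+ 2 : R[i]) = (1 - r^+2)%:C by rewrite rmorphB rmorph1 rmorphXn.
    by rewrite fmorph_eq0.
  have linAD : forall x y, Jstar (J (x + y)) = Jstar (J x) + Jstar (J y).
    by move=> x y; rewrite (linD linJ) (linD linJs).
  have linAZ : forall a x, Jstar (J (a *: x)) = a *: Jstar (J x).
    by move=> a x; rewrite (linZ linJ) (linZ linJs).
  have linI : linop (fun x : V => x) by [].
  pose P0 := fun x => (1 - r^+2)^-1%:C *: Jstar (J x) + (- (1 - r^+2)^-1 * r^+2)%:C *: x.
  pose P1 := fun x => (- (1 - r^+2)^-1)%:C *: Jstar (J x) + (1 - r^+2)^-1%:C *: x.
  have hs : forall x, P0 x + P1 x = x.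
    move=> x; rewrite /P0 /P1; move: (Jstar (J x)) => p; lin2 p x; fld.
  have hs' : forall x, P1 x + P0 x = x by move=> x; rewrite addrC.
  have l0 : linop P0 by apply: comb_lin.
  have l1 : linop P1 by apply: comb_lin.
  have a0 : is_adjoint ip P0 P0 by apply: comb_adj.
  have a1 : is_adjoint ip P1 P1 by apply: comb_adj.
  have i0 : forall x, P0 (P0 x) = P0 x.
    move=> x; rewrite /P0 linAD !linAZ AA; move: (Jstar (J x)) => p; lin2 p x; fld.
  have i1 : forall x, P1 (P1 x) = P1 x.
    move=> x; rewrite /P1 linAD !linAZ AA; move: (Jstar (J x)) => p; lin2 p x; fld.
  exists P0, P1; split=> //.
  - split=> //; split=> //; exists 1; exact: (proj_bound hip l0 i0 a0 l1 i1 a1 hs).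
  - split=> //; split=> //; exists 1; exact: (proj_bound hip l1 i1 a1 l0 i0 a0 hs').
  - move=> x; rewrite /P0 /P1; move: (Jstar (J x)) => p; lin2 p x; fld.
set s := Num.sqrt r.
have s0 : 0 < s by rewrite sqrtr_gt0.
have sn0 : s != 0 by rewrite gt_eqF.
have hrs : r = s^+2 by rewrite sqr_sqrtr // ltW.
pose Sstar := fun y => s^-1%:C *: Jstar y.
have adjS : is_adjoint ip (fun x => s^-1%:C *: J x) Sstar by apply: scale_adj.
rewrite C1E; split.
- case=> P0 [P1 [o0 o1 hs hA]].
  split.
  + split.
      move=> a x y /=; rewrite linJ scalerDr !scalerA; congr (_ *: _ + _); exact: mulrC.
    case: hJ => _ [M hM]; exists (s^-1 ^+ 2 * M) => x /=.
    rewrite /normsq (ipZl hip) (ipZr hip) conj_real.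
    have -> : (s^-1 ^+ 2 * M)%:C * ip x x = s^-1%:C * (s^-1%:C * (M%:C * ip x x)) :> R[i].
      by rewrite rmorphM rmorphXn expr2 !mulrA.
    have c0 : (0 : R[i]) <= s^-1%:C by rewrite ler0c invr_ge0 ltW.
    by apply: ler_wpM2l => //; apply: ler_wpM2l => //; exact: hM.
  + exists Sstar; split=> //; exists P1, P0; split=> //.
      by move=> x; rewrite addrC.
    move=> x; rewrite /Sstar /= (linZ linJs) hA.
    move: (P0 x) (P1 x) => p q; rewrite hrs; lin2 p q; fld.
- case=> _ [Ss' [hSs' [Q0 [Q1 [o0 o1 hs hQ]]]]].
  exists Q1, Q0; split=> //.
    by move=> x; rewrite addrC.
  move=> x; have e := hQ x.
  rewrite (adj_uniq hip hSs' adjS) /Sstar /= (linZ linJs) in e.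
  have -> : Jstar (J x) = (s^+2)%:C *: (s^-1%:C *: (s^-1%:C *: Jstar (J x))).
    by move: (Jstar (J x)) => p; rewrite !scalerA -[LHS]scale1r; congr (_ *: _); fld.
  rewrite e hrs; move: (Q0 x) (Q1 x) => p q; lin2 p q; fld.
Qed.
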